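(* Let $p$ be an odd prime and $\zeta=e^{2\pi\mathbf i/(p-1)}$. Then $$\prod_{1\le i<j\le \frac{p-1}{2}}(\zeta^{2j}-\zeta^{2i})=e^{\frac{(p-3)(3p+1)}{16}\pi\mathbf i}\cdot\Big(\frac{p-1}{2}\Big)^{\frac{p-1}{4}},$$ where $\big(\frac{p-1}{2}\big)^{\frac{p-1}{4}}$ denotes the positive real power.
   Context: $\mathbf i=\sqrt{-1}$. *)

(* Defs.v *)
From HB Require Import structures.
From mathcomp Require Import all_boot all_order all_algebra all_field.
Set Implicit Arguments. Unset Strict Implicit. Unset Printing Implicit Defensive.
Import Order.TTheory GRing.Theory Num.Theory.
Local Open Scope ring_scope.

(* Complex numbers are modelled by algC (algebraic complex numbers).
   For b > 0, [b.-root (-1)] is the b-th root of -1 with minimal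
   nonnegative argument, i.e. e^{pi i / b}. *)

Definition expipi (a b : nat) : algC := (b.-root (-1 : algC)) ^+ a.

(* pospow x a b = x^{a/b}, the positive real power, for x a positive real
   (b.-root x is then the positive real b-th root of x). *)
Definition pospow (x : algC) (a b : nat) : algC := (b.-root x) ^+ a.

Definition zeta (p : nat) : algC := expipi 2 (p.-1).

(* Main.v *)
Require Import Defs.
From HB Require Import structures.
From mathcomp Require Import all_boot all_order all_algebra all_field.
From mathcomp Require Import ring lra zify.
Import Order.TTheory GRing.Theory Num.Theory.
Local Open Scope ring_scope.


Lemma sector_real (a b c s : algR) : a^+2+b^+2 = 1 -> c^+2+s^+2 = 1 -> 0<s -> 0<=b -> b*c - a*s < 0 -> c < a.
Proof.
move=> h1 h2 hs hb h.
rewrite ltNge; apply/negP => hac.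
have [hc|hc] := lerP c 0.
  have hbs : b <= s by nra.
  nra.
have ha : 0 < a by nra.
have : s <= b by nra. nra.
Qed.

Lemma sector {x r : algC} : `|x| = 1 -> `|r| = 1 -> 0 < 'Im r -> 0 <= 'Im x ->
  'Im (x * r^*) < 0 -> 'Re r < 'Re x.
Proof.
move=> nx nr hr hx h.
have := @sector_real (in_algR (Creal_Re x)) (in_algR (Creal_Im x))
   (in_algR (Creal_Re r)) (in_algR (Creal_Im r)); apply.
- by apply: val_inj => /=; rewrite -normC2_Re_Im nx expr1n.
- by apply: val_inj => /=; rewrite -normC2_Re_Im nr expr1n.
- exact: hr.
- exact: hx.
- by move: h; rewrite ImM Re_conj Im_conj; congr (_ < _) => /=; ring.
Qed.

Lemma unit_conj {x : algC} : `|x| = 1 -> x * x^* = 1.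
Proof. by move=> nx; rewrite -normCK nx expr1n. Qed.

Lemma no_better_root (m : nat) (y : algC) : (0 < m)%N -> `|y| = 1 -> y ^+ m = -1 ->
  0 <= 'Im y -> 0 < 'Im (m.-root (-1 : algC)) -> 'Im (y * (m.-root (-1 : algC))^*) < 0 -> False.
Proof.
move=> m0 ny ym hy hr h.
have nr : `|m.-root (-1 : algC)| = 1 by rewrite norm_rootC normrN1 rootC1.
have := sector ny nr hr hy h.
move=> H; have := lt_le_trans H (rootC_Re_max m0 ym hy); by rewrite ltxx.
Qed.


Lemma unit_real {x : algC} : x \is Num.real -> `|x| = 1 -> x = 1 \/ x = -1.
Proof.
move=> xR nx; rewrite (realEsign xR) nx mulr1.
by case: (x < 0); [right|left].
Qed.

Lemma real_pos {x : algC} : x \is Num.real -> x != 0 -> ~~ (x < 0) -> 0 < x.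
Proof.
move=> xR x0 h; rewrite lt0r x0 /=.
by rewrite real_leNgt ?real0.
Qed.

Lemma even_sign (n : nat) : ~~ odd n -> (-1 : algC) ^+ n = 1.
Proof. by move=> e; rewrite -signr_odd (negbTE e). Qed.

Lemma odd_sign (n : nat) : odd n -> (-1 : algC) ^+ n = -1.
Proof. by move=> e; rewrite -signr_odd e. Qed.

Lemma degenerate (m K : nat) : (0 < m)%N -> ~~ odd m -> (0 < K < m)%N ->
  (m.-root (-1 : algC)) ^+ K = -1 -> 0 < 'Im (m.-root (-1 : algC)) -> False.
Proof.
move=> m0 em /andP[K0 Km] rK hr.
set r := m.-root (-1 : algC) in rK hr *.
have rm : r ^+ m = -1 by rewrite rootCK.
have nr : `|r| = 1 by rewrite norm_rootC normrN1 rootC1.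
have rr := unit_conj nr.
have m20 : (0 < m.*2)%N by rewrite double_gt0.
have [w pw] := C_prim_root_exists m20.
have wm : w ^+ m = -1.
  have h2 : (w ^+ m) ^+ 2 == 1 by rewrite -exprM muln2 prim_expr_order.
  move: h2; rewrite sqrf_eq1 => /orP[|/eqP//].
  rewrite -(prim_order_dvd pw) => /(dvdn_leq m0).
  rewrite -addnn; lia.
have nw : `|w| = 1.
  have h := pexprn_eq1 m.*2 (normr_ge0 w).
  rewrite -normrX prim_expr_order // normr1 eqxx in h.
  by move: h; rewrite (negbTE (lt0n_neq0 m20)) /= => /esym/eqP.
pose f i := 'Im (w * r ^+ i).
have fK i : f (i + K)%N = - f i.
  by rewrite /f exprD rK mulrN1 mulrN raddfN.
have nwr i : `|w * r ^+ i| = 1 by rewrite normrM normrX nr nw expr1n mulr1.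
have fnz i : f i != 0.
  apply/negP => /eqP /(Creal_ImP (w * r ^+ i)) wR.
  have e : (w * r ^+ i) ^+ K.*2 = 1.
    by case: (unit_real wR (nwr i)) => ->; rewrite ?expr1n // even_sign // odd_double.
  have r2K : r ^+ K.*2 = 1 by rewrite -muln2 exprM rK expr2 mulrNN mulr1.
  move: e; rewrite exprMn exprAC r2K expr1n mulr1 => /eqP.
  rewrite -(prim_order_dvd pw) => /dvdn_leq.
  rewrite -!addnn; lia.
have fR i : f i \is Num.real by apply: Creal_Im.
have fpos i : ~~ (f i < 0) -> 0 < f i by move=> h; apply: real_pos.
have [i0 [hi0 hi0K]] : exists i0, f i0 < 0 /\ 0 < f (i0 + K)%N.
  case: (boolP (f 0%N < 0)) => h.
    exists 0%N; split => //; rewrite fK oppr_gt0 //.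
  exists K; split.
    by rewrite -[K]add0n fK oppr_lt0 fpos.
  rewrite -[(K + K)%N]add0n addnA !fK opprK; exact: fpos.
have exP : exists t, (0 < t)%N && (0 < f (i0 + t)%N) by exists K; rewrite K0.
case: (ex_minnP exP) => T /andP[T0 fT] minT.
have fT1 : f (i0 + T.-1)%N < 0.
  case: T T0 fT minT => [//|[|T]] _ fT minT; first by rewrite addn0.
  apply: contraT => h.
  have := minT T.+1; rewrite /= fpos // => /(_ isT); lia.
set i := (i0 + T.-1)%N in fT1.
have fi1 : 0 < f i.+1 by rewrite /i -addnS prednK.
case: (boolP (odd i)) => oi.
- apply: (@no_better_root m (w * r ^+ i.+1) m0 (nwr _)).
  + by rewrite exprMn wm -exprM mulnC exprM rm even_sign ?mulr1 //= negbK.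
  + exact: ltW.
  + exact: hr.
  + by rewrite exprSr mulrA -mulrA rr mulr1.
- apply: (@no_better_root m (w * r ^+ i)^* m0); first by rewrite norm_conjC nwr.
  + by rewrite -rmorphXn /= exprMn wm -exprM mulnC exprM rm even_sign // mulr1 conjCN1.
  + by rewrite Im_conj oppr_ge0 ltW.
  + exact: hr.
  + rewrite -rmorphM /= Im_conj oppr_lt0 -mulrA -exprSr; exact: fi1.
Qed.


Lemma Im_root_pos1 {m : nat} : (0 < m)%N -> ~~ odd m -> 0 < 'Im (m.-root (-1 : algC)).
Proof.
move=> m0 em.
set r := m.-root (-1 : algC).
have rm : r ^+ m = -1 by rewrite rootCK.
have m1 : (1 < m)%N by move: m0 em; case: m {r rm} => [|[|]].
rewrite lt0r Im_rootC_ge0 // andbT; apply/negP => /eqP/(Creal_ImP r) rR.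
have : 0 <= r ^+ m.
  rewrite -[m](odd_double_half) (negbTE em) add0n -addnn exprD -expr2.
  by rewrite -real_normK ?rpredX // exprn_ge0.
by rewrite rm oppr_ge0 ler10.
Qed.

Lemma root_Im_pos (m k : nat) : (0 < m)%N -> ~~ odd m -> (0 < k < m)%N ->
  0 < 'Im ((m.-root (-1 : algC)) ^+ k).
Proof.
move=> m0 em /andP[k0 km].
have hr := Im_root_pos1 m0 em.
set r := m.-root (-1 : algC) in hr *.
have rm : r ^+ m = -1 by rewrite rootCK.
have nr : `|r| = 1 by rewrite norm_rootC normrN1 rootC1.
have rr := unit_conj nr.
have nrk j : `|r ^+ j| = 1 by rewrite normrX nr expr1n.
apply: contraT => nk; exfalso.
have exP : exists k, (0 < k)%N && ~~ (0 < 'Im (r ^+ k)) by exists k; rewrite k0.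
case: (ex_minnP exP) => K /andP[K0 nK] minK.
have Km : (K < m)%N by have := minK k; rewrite k0 nk => /(_ isT); lia.
have IK : 'Im (r ^+ K) <= 0 by rewrite real_leNgt ?Creal_Im ?real0.
have pos j : (0 < j < K)%N -> 0 < 'Im (r ^+ j).
  move=> /andP[j0 jK]; apply: contraT => nj.
  have := minK j; rewrite j0 nj => /(_ isT); lia.
have K1 : (1 < K)%N.
  case: K K0 nK {minK Km IK pos} => [|[|]] //; by rewrite expr1 hr.
set u := r ^+ K.-1.
have uK : r ^+ K = u * r by rewrite -exprSr prednK.
have Iu : 0 < 'Im u by apply: pos; apply/andP; split; lia.
have nu : `|u| = 1 by apply: nrk.
move: IK; rewrite le_eqVlt => /orP[/eqP IK0|IKn].
- have vR : r ^+ K \is Num.real by apply/(Creal_ImP _).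
  case: (unit_real vR (nrk K)) => vE.
  + have : u = r^* by rewrite -[u]mulr1 -rr mulrA -uK vE mul1r.
    by move=> ue; move: Iu; rewrite ue Im_conj oppr_gt0 => /(lt_trans hr); rewrite ltxx.
  + by apply: (@degenerate m K m0 em _ vE hr); rewrite K0 Km.
- have Ku1 : (0 < K.-1)%N by lia.
  case: (boolP (odd K)) => oK.
  + apply: (@no_better_root m (- r ^+ K) m0); first by rewrite normrN nrk.
    * by rewrite exprNn even_sign // mul1r exprAC rm odd_sign.
    * by rewrite raddfN oppr_ge0 ltW.
    * exact: hr.
    * by rewrite uK mulNr -mulrA rr mulr1 raddfN oppr_lt0.
  + apply: (@no_better_root m (- u^*) m0); first by rewrite normrN norm_conjC.
    * rewrite exprNn even_sign // mul1r -rmorphXn /= exprAC rm odd_sign ?conjCN1 //.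
      by move: oK; rewrite -{1}(prednK K0) /= negbK.
    * by rewrite -[- u^*]mulN1r ImMl ?rpredN ?rpred1 // Im_conj mulN1r opprK ltW.
    * exact: hr.
    * by rewrite mulNr -rmorphM /= -uK -mulN1r ImMl ?rpredN ?rpred1 // Im_conj mulN1r opprK.
Qed.


Lemma root_half_i (n : nat) : (0 < n)%N -> ((n.*2).-root (-1 : algC)) ^+ n = 'i.
Proof.
move=> n0.
have m0 : (0 < n.*2)%N by rewrite double_gt0.
have em : ~~ odd n.*2 by rewrite odd_double.
have hI := @root_Im_pos (n.*2) n m0 em ltac:(rewrite n0 /= -addnn; lia).
set x := _ ^+ n in hI *.
have x2 : x ^+ 2 = 'i ^+ 2 by rewrite sqrCi -exprM muln2 rootCK.
move/eqP: x2; rewrite eqf_sqr => /orP[/eqP //|/eqP xE].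
by move: hI; rewrite xE -mulN1r ImMl ?rpredN ?rpred1 // Im_i mulr1 oppr_gt0 ltr10.
Qed.

Lemma sum_double (n : nat) : (\sum_(1 <= d < n) (2 * d))%N = (n * (n - 1))%N.
Proof.
elim: n => [|n IH]; first by rewrite big_geq.
case: n IH => [|n] IH; first by rewrite big_geq.
rewrite big_nat_recr //= IH; nia.
Qed.

Lemma prod_one_sub (n : nat) (w : algC) : n.-primitive_root w ->
  \prod_(1 <= d < n) (1 - w ^+ d) = n%:R.
Proof.
move=> pw; have n0 := prim_order_gt0 pw.
have F := factor_Xn_sub_1 pw.
rewrite big_ltn // expr0 subrX1 in F.
have F' := mulfI (negbT (polyXsubC_eq0 1)) F.
have := congr1 (fun q => q.[1]) F'; rewrite /= horner_prod horner_sum.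
under eq_bigr do rewrite hornerXsubC.
under [X in _ = X -> _]eq_bigr do rewrite hornerXn expr1n.
by rewrite sumr_const card_ord.
Qed.


Lemma alg_fac (B z zc : algC) : z * zc = 1 ->
  B * (z * z) - B = B * z * 'i * (2 * ('i * (zc - z) / 2)).
Proof.
move=> hz.
have h2 : (2:algC) != 0 by rewrite pnatr_eq0.
rewrite (mulrC 2) divfK // !mulrA -(mulrA _ 'i 'i) mulCii.
rewrite mulrN1 -[X in _ - X = _]mulr1 -hz; ring.
Qed.

Lemma fac_lemma (n i j : nat) : (0 < n)%N -> (i < j)%N ->
  let r := (n.*2).-root (-1 : algC) in
  (r ^+ 2) ^+ (2 * j) - (r ^+ 2) ^+ (2 * i) =
  r ^+ (2 * (i + j) + n) * (2 * 'Im (r ^+ (2 * (j - i)))).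
Proof.
move=> n0 ij r.
have nr : `|r| = 1 by rewrite /r norm_rootC normrN1 rootC1 ?double_gt0.
set z := r ^+ (2 * (j - i)).
have nz : `|z| = 1 by rewrite normrX nr expr1n.
have e1 : (r ^+ 2) ^+ (2 * j) = r ^+ (4 * i) * (z * z).
  by rewrite -exprM -!exprD; congr (_ ^+ _); lia.
have e2 : (r ^+ 2) ^+ (2 * i) = r ^+ (4 * i) by rewrite -exprM; congr (_ ^+ _); lia.
have e3 : r ^+ (2 * (i + j) + n) = r ^+ (4 * i) * z * r ^+ n.
  by rewrite -!exprD; congr (_ ^+ _); lia.
rewrite e1 e2 e3 root_half_i // ImE.
by apply: alg_fac; apply: unit_conj.
Qed.


Lemma inner_sum c j : (\sum_(1 <= i < j) (2 * (i + j) + c))%N = ((j - 1) * (3 * j + c))%N.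
Proof.
case: j => [|j]; first by rewrite big_geq.
rewrite (eq_bigr (fun i => 2 * i + (2 * j.+1 + c))%N); last by move=> i _; lia.
rewrite big_split /= sum_double sum_nat_const_nat; nia.
Qed.

Lemma outer_sum c N : (2 * \sum_(1 <= j < N + 1) \sum_(1 <= i < j) (2 * (i + j) + c))%N
   = (N * (N - 1) * (2 * N + 2 + c))%N.
Proof.
under eq_bigr do rewrite inner_sum.
elim: N => [|N IH]; first by rewrite big_geq.
rewrite addn1 big_nat_recr //= mulnDr -(addn1 N) IH addnK.
case: N {IH} => [|N]; first by []. rewrite subSS subn0; nia.
Qed.


Definition rr (n : nat) : algC := (n.*2).-root (-1).
Definition gg (n d : nat) : algC := 2 * 'Im (rr n ^+ (2 * d)).
Definition GG (n j : nat) : algC := \prod_(1 <= d < j) gg n d.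

Lemma rr_norm n : (0 < n)%N -> `|rr n| = 1.
Proof. by move=> n0; rewrite /rr norm_rootC normrN1 rootC1 ?double_gt0. Qed.

Lemma rr_pow n : (0 < n)%N -> rr n ^+ (n.*2) = -1.
Proof. by move=> n0; rewrite /rr rootCK ?double_gt0. Qed.

Lemma gg_pos n d : (0 < n)%N -> (0 < d < n)%N -> 0 < gg n d.
Proof.
move=> n0 /andP[d0 dn]; rewrite /gg mulr_gt0 ?ltr0n //.
apply: root_Im_pos; rewrite ?double_gt0 ?odd_double //; apply/andP; split; lia.
Qed.

Lemma gg_sym n d : (0 < n)%N -> (d <= n)%N -> gg n (n - d) = gg n d.
Proof.
move=> n0 dn; rewrite /gg; congr (2 * _).
set z := rr n ^+ (2 * d).
have nz : `|z| = 1 by rewrite normrX rr_norm // expr1n.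
have e : rr n ^+ (2 * (n - d)) = - z^*.
  rewrite -[LHS]mulr1 -(unit_conj nz) mulrA -exprD.
  have -> : (2 * (n - d) + 2 * d)%N = n.*2 by lia.
  by rewrite rr_pow // mulN1r.
by rewrite e -mulN1r ImMl ?rpredN ?rpred1 // Im_conj mulN1r opprK.
Qed.

Lemma GG_n n : (0 < n)%N -> GG n n = n%:R.
Proof.
move=> n0; rewrite /GG.
set r := rr n.
have nr : `|r| = 1 by apply: rr_norm.
have rc := unit_conj nr.
have ri : r ^+ n = 'i by apply: root_half_i.
have h2 : (2:algC) != 0 by rewrite pnatr_eq0.
have ge d : gg n d = ('i * r^* ^+ (2 * d)) * (1 - (r ^+ 4) ^+ d).
  rewrite /gg ImE (mulrC 2) divfK // -/r rmorphXn /= -mulrA; congr (_ * _).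
  rewrite mulrBr mulr1; congr (_ - _).
  rewrite -exprM (_ : (4 * d)%N = (2 * d + 2 * d)%N); last by lia.
  by rewrite exprD mulrA -exprMn (mulrC r^*) rc expr1n mul1r.
rewrite (eq_bigr _ (fun d _ => ge d)) big_split /= big_split /= prodr_const_nat.
rewrite prodrXr sum_double.
have -> : 'i ^+ (n - 1) * r^* ^+ (n * (n - 1)) = 1.
  by rewrite -ri -exprM -exprMn rc expr1n.
rewrite mul1r; apply: prod_one_sub.
apply/andP; split => //; apply/forallP => i; rewrite unity_rootE.
have wn : (r ^+ 4) ^+ n = 1.
  rewrite -exprM (_ : (4 * n)%N = (n.*2 * 2)%N); last by lia.
  by rewrite exprM rr_pow // expr2 mulrNN mulr1.
case: (ltngtP i.+1 n) => [lt|gt|->]; last by rewrite wn !eqxx.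
  rewrite eqbF_neg; apply/negP => /eqP h.
  have hI := @root_Im_pos (n.*2) (2 * i.+1) (ltac:(by rewrite double_gt0)) (ltac:(by rewrite odd_double)) (ltac:(apply/andP; split; lia)).
  have h1 : (r ^+ (2 * i.+1)) ^+ 2 == 1 ^+ 2 by rewrite -exprM mulnC mulnA exprM h expr1n.
  move: h1; rewrite eqf_sqr => /orP[] /eqP hx; move: hI; rewrite -/r hx.
    by rewrite (Creal_ImP _ _) ?rpred1 // ltxx.
  by rewrite (Creal_ImP _ _) ?rpredN ?rpred1 // ltxx.
by have := ltn_ord i; lia.
Qed.

Lemma GG_sym n j : (0 < n)%N -> (0 < j <= n)%N -> GG n j * GG n (n + 1 - j) = GG n n.
Proof.
move=> n0; elim: j => [//|j IH] /andP[_ jn].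
case: j IH jn => [|j] IH jn.
  by rewrite /GG [X in X * _]big_geq // mul1r addnK.
have IH' := IH (ltac:(apply/andP; split; lia)).
have e1 : GG n j.+2 = GG n j.+1 * gg n j.+1 by rewrite /GG big_nat_recr.
have e2 : GG n (n + 1 - j.+1) = GG n (n + 1 - j.+2) * gg n j.+1.
  rewrite -(@gg_sym n j.+1 n0 (ltnW jn)) /GG.
  rewrite (_ : (n + 1 - j.+1)%N = (n - j.+1).+1); last by lia.
  rewrite big_nat_recr /=; last by lia.
  by rewrite (_ : (n + 1 - j.+2)%N = (n - j.+1)%N); last by lia.
by rewrite e1 -IH' e2; ring.
Qed.

Lemma R_sq n : (0 < n)%N ->
  (\prod_(1 <= j < n + 1) \prod_(1 <= i < j) gg n (j - i)) ^+ 2 = n%:R ^+ n.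
Proof.
move=> n0.
have inner j : \prod_(1 <= i < j) gg n (j - i) = GG n j.
  rewrite /GG big_nat_rev; apply: eq_big_nat => i /andP[i1 ij].
  congr (gg n _); lia.
under eq_bigr do rewrite inner.
rewrite expr2 {2}big_nat_rev -big_split /=.
rewrite (eq_big_nat _ _ (F2 := fun _ => GG n n)); last first.
  move=> j /andP[j1 jn]; rewrite (_ : (1 + (n + 1) - j.+1)%N = (n + 1 - j)%N); last by lia.
  by apply: GG_sym => //; apply/andP; split; lia.
by rewrite prodr_const_nat addnK GG_n.
Qed.


Lemma main_n n : (0 < n)%N ->
 \prod_(1 <= j < n + 1) \prod_(1 <= i < j) ((rr n ^+ 2) ^+ (2 * j) - (rr n ^+ 2) ^+ (2 * i))
 = (16.-root (-1:algC)) ^+ (4 * ((n - 1) * (3 * n + 2))) * (4.-root (n%:R : algC)) ^+ (n.*2).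
Proof.
move=> n0.
rewrite (eq_bigr (fun j => \prod_(1 <= i < j) (rr n ^+ (2*(i+j)+n)) *
                           \prod_(1 <= i < j) gg n (j - i))); last first.
  move=> j _; rewrite -big_split; apply: eq_big_nat => i /andP[_ ij].
  exact: fac_lemma.
rewrite big_split /=.
under eq_bigr do rewrite prodrXr.
rewrite prodrXr.
set T := (\sum_(1 <= j < n + 1) _)%N.
have hT : (2 * T = n * ((n - 1) * (3 * n + 2)))%N by rewrite /T outer_sum; nia.
set X := ((n - 1) * (3 * n + 2))%N in hT *.
have oX : ~~ odd X.
  rewrite /X oddM oddD oddM /= oddB //=.
  by case: (odd n).
have hX : X = ((X./2).*2)%N by rewrite halfK (negbTE oX) subn0.
set k := X./2 in hX.
have Tk : T = (n * k)%N by rewrite -muln2 in hX; nia.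
have ph : rr n ^+ T = (16.-root (-1:algC)) ^+ (4 * X).
  have e16 : (16.-root (-1:algC)) ^+ 8 = 'i := @root_half_i 8 isT.
  rewrite hX (_ : (4 * (k.*2))%N = (8 * k)%N); last by rewrite -muln2; lia.
  by rewrite exprM e16 -(@root_half_i n n0) -exprM Tk.
rewrite ph; congr (_ * _).
set R := \prod_(1 <= j < n + 1) _.
have R0 : 0 <= R.
  rewrite /R big_seq; apply: prodr_ge0 => j; rewrite mem_index_iota => /andP[j1 jn].
  rewrite big_seq; apply: prodr_ge0 => i; rewrite mem_index_iota => /andP[i1 ij].
  by apply: ltW; apply: gg_pos => //; apply/andP; split; lia.
set Q := _ ^+ n.*2.
have Q0 : 0 <= Q by rewrite /Q exprn_ge0 // rootC_ge0 // ler0n.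
apply/eqP; rewrite -(@eqrXn2 _ 4) //; apply/eqP.
rewrite (_ : 4%N = (2 * 2)%N) // exprM R_sq // -exprM /Q -exprM.
have -> : 4.-root (n%:R:algC) ^+ (n.*2 * (2*2)) = n%:R ^+ (n.*2) by rewrite mulnC exprM (_ : (2*2)%N = 4%N) // rootCK.
by rewrite muln2.
Qed.

Theorem mainTheorem7 (p : nat) (hp : prime p) (hodd : odd p) :
  \prod_(1 <= j < (p.-1)./2 + 1) \prod_(1 <= i < j)
      (zeta p ^+ (2 * j) - zeta p ^+ (2 * i))
  = expipi ((p - 3) * (3 * p + 1)) 16 * pospow (((p.-1)./2)%:R) p.-1 4.
Proof.
have p2 := prime_gt1 hp.
set n := (p.-1)./2.
have hp1 : p.-1 = n.*2.
  have ep : odd p.-1 = false by case: (p) hodd p2 => //= q /negbTE.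
  by rewrite /n halfK ep subn0.
have n0 : (0 < n)%N.
  have : p != 2%N by apply/eqP => e; rewrite e in hodd.
  move: hp1; lia.
have hE : ((p - 3) * (3 * p + 1) = 4 * ((n - 1) * (3 * n + 2)))%N.
  move: hp1; rewrite -muln2 => hp1.
  have hpn : p = (2 * n + 1)%N by lia.
  rewrite hpn; nia.
rewrite /zeta /expipi /pospow hE hp1 -/(rr n).
exact: main_n.
Qed.
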